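(* Let $G$ be an ordered group and let $S$ be a finite subset of $G$ with $|S|=k\geq 1$. If $|S^2|<2|S|$, then there exist commuting elements $x,y\in G$ such that $S=\{y,yx,yx^2,\ldots,yx^{k-1}\}$. Equivalently, if $S$ is not of this form (not a geometric progression), then $|S^2|\geq 2|S|$.
   Context: An ordered group is a group $G$ (written multiplicatively) equipped with a total order $<$ that is invariant under both left and right multiplication: $a<b$ implies $ca<cb$ and $ac<bc$ for all $a,b,c\in G$. For a subset $S\subseteq G$, $S^2=\{ab : a,b\in S\}$. A geometric progression is a set of the form $\{yx^i : 0\le i\le k-1\}$ with $x,y\in G$ commuting. *)

(* Defs.v *)
From Stdlib Require Import Arith List.
Import ListNotations.
Set Implicit Arguments.

Record ordered_group := OrderedGroup {
  carrier :> Type;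
  mul : carrier -> carrier -> carrier;
  one : carrier;
  inv : carrier -> carrier;
  lt : carrier -> carrier -> Prop;
  mulA : forall a b c, mul a (mul b c) = mul (mul a b) c;
  mul1g : forall a, mul one a = a;
  mulVg : forall a, mul (inv a) a = one;
  lt_irrefl : forall a, ~ lt a a;
  lt_trans : forall a b c, lt a b -> lt b c -> lt a c;
  lt_total : forall a b, lt a b \/ a = b \/ lt b a;
  lt_mull : forall a b c, lt a b -> lt (mul c a) (mul c b);
  lt_mulr : forall a b c, lt a b -> lt (mul a c) (mul b c)
}.

Fixpoint gpow (G : ordered_group) (x : G) (n : nat) : G :=
  match n with
  | O => one G
  | S m => mul G x (@gpow G x m)
  end.

Definition has_card (G : ordered_group) (P : G -> Prop) (n : nat) : Prop :=
  exists l : list G, NoDup l /\ (forall z, In z l <-> P z) /\ length l = n.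

Definition sq_set (G : ordered_group) (S : G -> Prop) : G -> Prop :=
  fun z => exists a b, S a /\ S b /\ z = mul G a b.
Arguments gpow {G} x n.
Arguments has_card {G} P n.
Arguments sq_set {G} S _.

(* Main.v *)
Require Import Defs.
From Stdlib Require Import Arith List Lia.

Lemma lt_neq (G : ordered_group) (a b : G) : lt G a b -> a <> b.
Proof. intros H E; subst; exact (lt_irrefl _ _ H). Qed.

Lemma insert_pos (G : ordered_group) (f : nat -> G) (a : G) n :
  (forall i j, i < j < n -> lt G (f i) (f j)) -> (forall i, i < n -> f i <> a) ->
  exists p, p <= n /\ (forall i, i < p -> lt G (f i) a) /\
            (forall i, p <= i < n -> lt G a (f i)).
Proof.
  induction n as [|n IH]; intros Hm Hn.
  - exists 0; split; [lia|split; intros; lia].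
  - destruct IH as [p [Hp [H1 H2]]].
    + intros; apply Hm; lia.
    + intros; apply Hn; lia.
    + destruct (lt_total _ (f n) a) as [Hl|[He|Hl]].
      * exists (S n); split; [lia|split].
        -- intros i Hi. destruct (Nat.eq_dec i n) as [->|Hne]; auto.
           apply lt_trans with (f n); auto. apply Hm; lia.
        -- intros; lia.
      * exfalso; apply (Hn n); auto.
      * exists p; split; [lia|split]; auto.
        intros i Hi. destruct (Nat.eq_dec i n) as [->|Hne]; auto. apply H2; lia.
Qed.

Lemma sort_list (G : ordered_group) (l : list G) : NoDup l ->
  exists f : nat -> G, (forall i j, i < j < length l -> lt G (f i) (f j)) /\
    (forall z, In z l <-> exists i, i < length l /\ z = f i).
Proof.
  induction l as [|a l IH]; intros Hnd.
  - exists (fun _ => one G); split; [intros; simpl in *; lia|].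
    intros z; simpl; split; [tauto|intros [i [Hi _]]; lia].
  - apply NoDup_cons_iff in Hnd as [Hna Hnd].
    destruct (IH Hnd) as [f' [Hm Hin]].
    set (n := length l) in *.
    destruct (@insert_pos G f' a n Hm) as [p [Hp [H1 H2]]].
    { intros i Hi E. apply Hna. apply Hin. exists i; split; auto. }
    exists (fun i => if i <? p then f' i else if i =? p then a else f' (i - 1)).
    split.
    + simpl; fold n. intros i j Hij.
      destruct (Nat.ltb_spec i p); destruct (Nat.eqb_spec i p);
      destruct (Nat.ltb_spec j p); destruct (Nat.eqb_spec j p); try lia.
      * apply Hm; lia.
      * apply H1; lia.
      * apply Hm; lia.
      * apply H2; lia.
      * apply Hm; lia.
    + intros z. simpl; fold n. split.
      * intros [E|Hz].
        -- exists p; split; [lia|]. rewrite Nat.ltb_irrefl, Nat.eqb_refl; auto.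
        -- apply Hin in Hz as [i [Hi ->]].
           destruct (Nat.ltb_spec i p).
           ++ exists i; split; [lia|]. destruct (Nat.ltb_spec i p); [auto|lia].
           ++ exists (S i); split; [lia|].
              destruct (Nat.ltb_spec (S i) p); [lia|].
              destruct (Nat.eqb_spec (S i) p); [lia|]. f_equal; lia.
      * intros [i [Hi ->]].
        destruct (Nat.ltb_spec i p).
        -- right; apply Hin; exists i; split; auto; lia.
        -- destruct (Nat.eqb_spec i p); [left; auto|].
           right; apply Hin; exists (i-1); split; auto; lia.
Qed.

Lemma mulgV (G : ordered_group) (a : G) : mul G a (inv G a) = one G.
Proof.
  transitivity (mul G (mul G (inv G (inv G a)) (inv G a)) (mul G a (inv G a))).
  - rewrite mulVg, mul1g; auto.
  - rewrite <- mulA, (mulA G (inv G a) a), mulVg, mul1g. apply mulVg.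
Qed.

Lemma mulg1 (G : ordered_group) (a : G) : mul G a (one G) = a.
Proof. rewrite <- (mulVg G a), mulA, mulgV, mul1g; auto. Qed.

Lemma mul_cancel_l (G : ordered_group) (c a b : G) : mul G c a = mul G c b -> a = b.
Proof.
  intros E. destruct (lt_total G a b) as [H|[H|H]]; auto;
  apply (lt_mull G _ _ c) in H; rewrite E in H; exfalso; exact (lt_irrefl _ _ H).
Qed.

Lemma gpow_succ_r (G : ordered_group) (x : G) n : gpow x (S n) = mul G (gpow x n) x.
Proof.
  induction n; simpl. - rewrite mulg1, mul1g; auto.
  - simpl in IHn. rewrite IHn at 1. rewrite mulA; auto.
Qed.

Lemma nodup_chain (G : ordered_group) (c : nat -> G) s N :
  (forall i j, s <= i -> i < j < s + N -> lt G (c i) (c j)) -> NoDup (map c (seq s N)).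
Proof.
  revert s; induction N; intros s Hm; simpl; constructor.
  - intros Hin. apply in_map_iff in Hin as [t [E Ht]]. apply in_seq in Ht.
    assert (lt G (c s) (c t)) by (apply Hm; lia). rewrite E in H.
    exact (lt_irrefl _ _ H).
  - apply IHN. intros; apply Hm; lia.
Qed.
Theorem lemma2 (G : ordered_group) (S : G -> Prop) (k : nat) :
  1 <= k -> has_card S k ->
  (exists m, has_card (sq_set S) m /\ m < 2 * k) ->
  exists x y : G, mul G x y = mul G y x /\
    (forall z, S z <-> exists i, i < k /\ z = mul G y (gpow x i)).
Proof.
  rename S into P.
  intros Hk [l [Hnd [Hl Hlen]]] [m [[L [HndL [HL HlenL]]] Hm]].
  destruct (@sort_list G l Hnd) as [f [Hf Hin]]. rewrite Hlen in *.
  assert (HS : forall z, P z <-> exists i, i < k /\ z = f i).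
  { intros z; rewrite <- Hl; apply Hin. }
  clear Hl Hin Hnd Hlen l.
  assert (HPf : forall i, i < k -> P (f i)).
  { intros i Hi; apply HS; exists i; auto. }
  set (c := fun j => mul G (f (Nat.div2 j)) (f (Nat.div2 (S j)))).
  assert (Hce : forall i, c (2*i) = mul G (f i) (f i)).
  { intros i; unfold c; rewrite Nat.div2_double, Nat.div2_succ_double; auto. }
  assert (Hco : forall i, c (S (2*i)) = mul G (f i) (f (S i))).
  { intros i; unfold c; rewrite Nat.div2_succ_double.
    replace (S (S (2*i))) with (2 * S i) by lia. rewrite Nat.div2_double; auto. }
  set (N := 2 * k - 1).
  assert (Hstep : forall j, S j < N -> lt G (c j) (c (S j))).
  { intros j Hj. destruct (Nat.Even_or_Odd j) as [[i ->]|[i ->]].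
    - rewrite Hce, Hco. apply lt_mull, Hf. unfold N in *; lia.
    - replace (2*i+1) with (S (2*i)) by lia. rewrite Hco.
      replace (S (S (2*i))) with (2 * S i) by lia. rewrite Hce.
      apply lt_mulr, Hf. unfold N in *; lia. }
  assert (Hmono : forall i j, i < j < N -> lt G (c i) (c j)).
  { intros i j; induction j as [|j IH]; intros Hij; [lia|].
    destruct (Nat.eq_dec i j) as [->|Hne].
    - apply Hstep; lia.
    - apply lt_trans with (c j); [apply IH; lia|apply Hstep; lia]. }
  assert (Hcin : forall j, j < N -> sq_set P (c j)).
  { intros j Hj. destruct (Nat.Even_or_Odd j) as [[i ->]|[i ->]].
    - rewrite Hce. exists (f i), (f i). unfold N in *.
      split; [apply HPf; lia|split; [apply HPf; lia|auto]].
    - replace (2*i+1) with (S (2*i)) by lia. rewrite Hco.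
      exists (f i), (f (S i)). unfold N in *.
      split; [apply HPf; lia|split; [apply HPf; lia|auto]]. }
  assert (Hincl : incl L (map c (seq 0 N))).
  { apply NoDup_length_incl.
    - apply nodup_chain. intros; apply Hmono; lia.
    - rewrite length_map, length_seq. unfold N; lia.
    - intros z Hz. apply in_map_iff in Hz as [j [<- Hj]]. apply in_seq in Hj.
      apply HL, Hcin; lia. }
  assert (Hall : forall z, sq_set P z -> exists t, t < N /\ z = c t).
  { intros z Hz. apply HL, Hincl, in_map_iff in Hz as [t [<- Ht]].
    apply in_seq in Ht. exists t; split; auto; lia. }
  assert (Hbet : forall j z, sq_set P z -> S (S j) < N -> lt G (c j) z ->
             lt G z (c (S (S j))) -> z = c (S j)).
  { intros j z Hz Hj H1 H2. destruct (Hall z Hz) as [t [Ht ->]].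
    destruct (Nat.lt_total t (S j)) as [Hlt|[->|Hlt]]; auto; exfalso.
    - destruct (Nat.eq_dec t j) as [->|Hne]; [exact (lt_irrefl _ _ H1)|].
      apply (lt_irrefl G (c t)). apply lt_trans with (c j); auto. apply Hmono; lia.
    - destruct (Nat.eq_dec t (S (S j))) as [->|Hne]; [exact (lt_irrefl _ _ H2)|].
      apply (lt_irrefl G (c t)). apply lt_trans with (c (S (S j))); auto.
      apply Hmono; lia. }
  assert (Hcomm : forall i, S i < k -> mul G (f (S i)) (f i) = mul G (f i) (f (S i))).
  { intros i Hi. rewrite <- Hco. apply Hbet.
    - exists (f (S i)), (f i). split; [apply HPf; lia|split; [apply HPf; lia|auto]].
    - unfold N; lia.
    - rewrite Hce. apply lt_mulr, Hf; lia.
    - replace (S (S (2*i))) with (2 * S i) by lia. rewrite Hce.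
      apply lt_mull, Hf; lia. }
  assert (Hsq : forall i, S (S i) < k ->
             mul G (f i) (f (S (S i))) = mul G (f (S i)) (f (S i))).
  { intros i Hi. rewrite <- Hce. replace (2 * S i) with (S (S (2*i))) by lia.
    apply Hbet.
    - exists (f i), (f (S (S i))). split; [apply HPf; lia|split; [apply HPf; lia|auto]].
    - unfold N; lia.
    - rewrite Hco. apply lt_mull, Hf; lia.
    - replace (S (S (S (2*i)))) with (S (2 * S i)) by lia. rewrite Hco.
      apply lt_mulr, Hf; lia. }
  destruct (Nat.eq_dec k 1) as [->|Hk2].
  - exists (one G), (f 0). split; [rewrite mul1g, mulg1; auto|].
    intros z; rewrite HS; split; intros [i [Hi ->]]; exists i; split; auto;
    replace i with 0 by lia; simpl; rewrite mulg1; auto.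
  - set (x := mul G (inv G (f 0)) (f 1)).
    assert (Hsucc : forall i, S i < k -> f (S i) = mul G (f i) x).
    { induction i as [|i IH]; intros Hi.
      - unfold x. rewrite mulA, mulgV, mul1g; auto.
      - apply (mul_cancel_l G (f i)). rewrite Hsq by lia.
        transitivity (mul G (f (S i)) (mul G (f i) x)).
        { f_equal. apply IH; lia. }
        rewrite (mulA G (f (S i))), Hcomm by lia.
        rewrite <- mulA. auto. }
    assert (Hpow : forall i, i < k -> f i = mul G (f 0) (gpow x i)).
    { induction i as [|i IH]; intros Hi.
      - simpl; rewrite mulg1; auto.
      - rewrite Hsucc, IH, gpow_succ_r, mulA by lia; auto. }
    exists x, (f 0). split.
    + unfold x. rewrite <- mulA, Hcomm by lia.
      rewrite !mulA, mulgV, mulVg, !mul1g. auto.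
    + intros z; rewrite HS; split; intros [i [Hi ->]]; exists i; split; auto;
      first [apply Hpow; auto | symmetry; apply Hpow; auto].
Qed.
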